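(* Let $\mathbf K$ be a commutative field. (i) For all $p,q\in\mathbb N$, an element $X\in\mathbf K^{\mathcal M_{p\times q}}$ is a recurrence matrix if and only if it is a birecurrence matrix. (ii) The palindromic automorphism $\iota$ of $\mathbf K^{\mathcal M_{p\times q}}$ restricts to an involutive automorphism of $\mathrm{Rec}_{p\times q}(\mathbf K)$; consequently, if $\mathrm{char}\,\mathbf K\ne2$, for $A\in\mathrm{Rec}_{p\times q}(\mathbf K)$ the even and odd parts $A_+=(A+\iota A)/2$ and $A_-=(A-\iota A)/2$ lie in $\mathrm{Rec}_{p\times q}(\mathbf K)$. (iii) The palindromic automorphism yields an involutive automorphic functor of the category of recurrence matrices: it preserves each $\mathrm{Rec}_{p\times q}(\mathbf K)$ and satisfies $\iota(AB)=\iota(A)\iota(B)$ for $A\in\mathrm{Rec}_{p\times r}(\mathbf K)$, $B\in\mathrm{Rec}_{r\times q}(\mathbf K)$.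
   Context: $\mathcal M_{p\times q}$ is the monoid of pairs $(U,W)$ of words of common length with $U$ over $\{0,\dots,p-1\}$, $W$ over $\{0,\dots,q-1\}$. For $X:\mathcal M_{p\times q}\to\mathbf K$ (values $X[U,W]$): right shifts $(\rho(S,T)X)[U,W]=X[US,WT]$; left shifts $(\lambda(s_1\dots s_n,t_1\dots t_n)X)[U,W]=X[s_n\dots s_1U,t_n\dots t_1W]$. $X$ is a recurrence matrix (element of $\mathrm{Rec}_{p\times q}(\mathbf K)$) if the span of $\{\rho(S,T)X\}$ is finite-dimensional, and a birecurrence matrix if the span of $\{\lambda(S',T')\rho(S,T)X\}$ is finite-dimensional. The palindromic automorphism is $(\iota X)[s_1\dots s_n,t_1\dots t_n]=X[s_n\dots s_1,t_n\dots t_1]$. Matrix product: $(AB)[U,W]=\sum_{V\in\{0,\dots,r-1\}^l}A[U,V]B[V,W]$ for $(U,W)$ of length $l$. *)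

(* Defs.v *)
From HB Require Import structures.
From mathcomp Require Import all_boot all_order all_algebra.
Set Implicit Arguments. Unset Strict Implicit. Unset Printing Implicit Defensive.
Import GRing.Theory.
Local Open Scope ring_scope.

(* An element (U,W) of M_{p x q} (words of common length over {0..p-1} and
   {0..q-1}) is encoded as a single word over the product alphabet 'I_p * 'I_q:
   U = unzip1 s, W = unzip2 s. *)
Definition word (p q : nat) := seq ('I_p * 'I_q).

Definition kfun (K : fieldType) (p q : nat) := word p q -> K.

Definition rshift (K : fieldType) p q (t : word p q) (X : kfun K p q) : kfun K p q :=
  fun s => X (s ++ t).

(* left shift: (lambda(s1..sn,t1..tn) X)[U,W] = X[sn..s1 U, tn..t1 W] *)
Definition lshift (K : fieldType) p q (t : word p q) (X : kfun K p q) : kfun K p q :=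
  fun s => X (rev t ++ s).

Definition pal (K : fieldType) p q (X : kfun K p q) : kfun K p q :=
  fun s => X (rev s).

Definition fin_dim_span (K : fieldType) (T : Type) (S : (T -> K) -> Prop) : Prop :=
  exists (n : nat) (B : 'I_n -> T -> K),
    forall f, S f -> exists c : 'I_n -> K, forall w, f w = \sum_(i < n) c i * B i w.

Definition is_rec (K : fieldType) p q (X : kfun K p q) : Prop :=
  fin_dim_span (fun f => exists t, f = rshift t X).

Definition is_birec (K : fieldType) p q (X : kfun K p q) : Prop :=
  fin_dim_span (fun f => exists t' t, f = lshift t' (rshift t X)).

(* matrix product: (AB)[U,W] = sum_{V of length l} A[U,V] B[V,W] *)
Definition kmul (K : fieldType) p r q (A : kfun K p r) (B : kfun K r q) : kfun K p q :=
  fun s => \sum_(V : (size s).-tuple 'I_r)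
             A (zip (unzip1 s) V) * B (zip (V : seq 'I_r) (unzip2 s)).

Definition kid (K : fieldType) p : kfun K p p :=
  fun s => (unzip1 s == unzip2 s)%:R.

Definition kadd (K : fieldType) p q (X Y : kfun K p q) : kfun K p q := fun s => X s + Y s.
Definition kscale (K : fieldType) p q (a : K) (X : kfun K p q) : kfun K p q := fun s => a * X s.

(* Main.v *)
Require Import Defs.
From mathcomp Require Import all_boot all_order all_algebra.
From mathcomp Require Import ring.
From Stdlib Require Import Classical FunctionalExtensionality.
Set Implicit Arguments. Unset Strict Implicit.
Import GRing.Theory.
Local Open Scope ring_scope.

Section S.
Variable K : fieldType.

Lemma fds_seq (T I : Type) (r : seq I) (G : I -> T -> K) (S : (T -> K) -> Prop) :
  (forall f, S f -> exists c : I -> K, forall w, f w = \sum_(i <- r) c i * G i w) ->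
  fin_dim_span S.
Proof.
case: r => [|i0 r'] H.
  exists 0%N, (fun _ _ => 0) => f /H [c Hc]; exists (fun _ => 0) => w.
  by rewrite Hc big_nil big_ord0.
exists (size (i0 :: r')), (fun j => G (nth i0 (i0 :: r') j)) => f /H [c Hc].
exists (fun j => c (nth i0 (i0 :: r') j)) => w.
by rewrite Hc (big_nth i0) big_mkord.
Qed.

Lemma interp (T : Type) n (B : 'I_n -> T -> K) :
  exists P : seq (T * (T -> K)), forall f : T -> K,
    (exists c : 'I_n -> K, forall w, f w = \sum_i c i * B i w) ->
    forall w, f w = \sum_(pr <- P) f pr.1 * pr.2 w.
Proof.
elim: n B => [|n IH] B.
  by exists [::] => f [c Hc] w; rewrite Hc big_ord0 big_nil.
have [P' HP'] := IH (fun i => B (lift ord0 i)).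
pose g w := B ord0 w - \sum_(pr <- P') B ord0 pr.1 * pr.2 w.
have key : forall f c, (forall w, f w = \sum_i c i * B i w) ->
    forall w, f w = c ord0 * g w + \sum_(pr <- P') f pr.1 * pr.2 w.
  move=> f c Hc w.
  pose f' w := \sum_(i < n) c (lift ord0 i) * B (lift ord0 i) w.
  have Hf' : forall w, f' w = \sum_(pr <- P') f' pr.1 * pr.2 w.
    by apply: HP'; exists (fun i => c (lift ord0 i)).
  have Hf : forall w, f w = c ord0 * B ord0 w + f' w by move=> x; rewrite Hc big_ord_recl.
  rewrite (Hf w) (Hf' w) /g.
  under [X in _ = _ + X]eq_bigr => pr _ do rewrite Hf mulrDl -mulrA.
  rewrite big_split /= -mulr_sumr.
  ring.
case: (classic (forall w, g w = 0)) => [g0|].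
  exists P' => f [c Hc] w; by rewrite (key f c Hc) g0 mulr0 add0r.
move=> /not_all_ex_not [y gy].
have gy' : g y != 0 by apply/eqP.
pose E w := g w / g y.
exists ((y, E) :: [seq (pr.1, fun w => pr.2 w - pr.2 y * E w) | pr <- P']).
move=> f [c Hc] w.
rewrite big_cons big_map /=.
under eq_bigr => pr _ do rewrite mulrBr mulrA.
rewrite sumrB -mulr_suml (key f c Hc y) (key f c Hc w) /E.
field. exact: gy'.
Qed.

Lemma rec_birec p q (X : kfun K p q) : is_rec X -> is_birec X.
Proof.
move=> [n [B HB]].
have [P HP] := interp B.
have H1 : forall u t, X (u ++ t) = \sum_(pr <- P) X (pr.1 ++ t) * pr.2 u.
  move=> u t; have := HP (Defs.rshift t X) (HB _ (ex_intro _ t erefl)) u.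
  by rewrite /Defs.rshift.
pose d : word p q * (word p q -> K) := ([::], fun _ => 0).
have [P2 HP2] := interp (fun i : 'I_(size P) => fun t => X ((nth d P i).1 ++ t)).
have H2 : forall u w, X (u ++ w) = \sum_(pr <- P2) X (u ++ pr.1) * pr.2 w.
  move=> u w; apply: (HP2 (fun t => X (u ++ t))).
  exists (fun i => (nth d P i).2 u) => t.
  by rewrite H1 (big_nth d) big_mkord; apply: eq_bigr => i _; rewrite mulrC.
apply: (@fds_seq _ _ [seq (a, b) | a <- P, b <- P2]
          (fun ab s => X (ab.1.1 ++ s ++ ab.2.1))).
move=> f [t' [t ->]].
exists (fun ab => ab.1.2 (rev t') * ab.2.2 t) => s.
rewrite /Defs.lshift /Defs.rshift big_allpairs exchange_big /=.
rewrite H2; apply: eq_bigr => b _.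
rewrite -catA H1 mulr_suml; apply: eq_bigr => a _ /=.
ring.
Qed.

Lemma birec_rec p q (X : kfun K p q) : is_birec X -> is_rec X.
Proof.
move=> [n [B HB]]; exists n, B => f [t ->]; apply: HB.
by exists [::], t.
Qed.

Lemma rec_pal p q (X : kfun K p q) : is_rec X -> is_rec (pal X).
Proof.
move=> /rec_birec [n [B HB]].
exists n, (fun i s => B i (rev s)) => f [t ->].
have [c Hc] := HB (Defs.lshift t (Defs.rshift [::] X)) (ex_intro _ t (ex_intro _ [::] erefl)).
exists c => w; rewrite /Defs.rshift /pal rev_cat -Hc /Defs.lshift /Defs.rshift.
by rewrite cats0.
Qed.

Lemma rec_scale p q a (X : kfun K p q) : is_rec X -> is_rec (kscale a X).
Proof.
move=> [n [B HB]]; exists n, B => f [t ->].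
have [c Hc] := HB (Defs.rshift t X) (ex_intro _ t erefl).
exists (fun i => a * c i) => w.
rewrite /Defs.rshift /kscale.
have := Hc w; rewrite /Defs.rshift => ->.
by rewrite mulr_sumr; apply: eq_bigr => i _; rewrite mulrA.
Qed.

Lemma rec_add p q (X Y : kfun K p q) : is_rec X -> is_rec Y -> is_rec (kadd X Y).
Proof.
move=> [n1 [B1 HB1]] [n2 [B2 HB2]].
exists (n1 + n2)%N, (fun i => match split i with inl j => B1 j | inr k => B2 k end).
move=> f [t ->].
have [c1 Hc1] := HB1 (Defs.rshift t X) (ex_intro _ t erefl).
have [c2 Hc2] := HB2 (Defs.rshift t Y) (ex_intro _ t erefl).
exists (fun i => match split i with inl j => c1 j | inr k => c2 k end) => w.
rewrite big_split_ord /=.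
have := Hc1 w; have := Hc2 w; rewrite /Defs.rshift /kadd => -> ->.
congr (_ + _); apply: eq_bigr => i _.
  by rewrite (unsplitK (inl i) : split (fintype.lshift n2 i) = inl i).
by rewrite (unsplitK (inr i) : split (fintype.rshift n1 i) = inr i).
Qed.

Lemma sum_tuple_eq (T : finType) n m (e : n = m) (F : seq T -> K) :
  \sum_(V : n.-tuple T) F V = \sum_(V : m.-tuple T) F V.
Proof. by subst. Qed.

Lemma sum_tuple_rev (T : finType) n (F : seq T -> K) :
  \sum_(V : n.-tuple T) F V = \sum_(V : n.-tuple T) F (rev V).
Proof.
rewrite (reindex_inj (h := fun V : n.-tuple T => rev_tuple V)) //.
by move=> V1 V2 /(congr1 val) /= /(congr1 rev); rewrite !revK => /val_inj.
Qed.

Lemma pal_kmul p r q (A : kfun K p r) (B : kfun K r q) :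
  pal (kmul A B) = kmul (pal A) (pal B).
Proof.
apply: functional_extensionality => s.
rewrite /pal /kmul.
rewrite (@sum_tuple_eq _ _ (size s) (size_rev s)
   (fun V => A (zip (unzip1 (rev s)) V) * B (zip V (unzip2 (rev s))))).
rewrite (@sum_tuple_rev _ (size s)
   (fun V => A (zip (unzip1 (rev s)) V) * B (zip V (unzip2 (rev s))))).
apply: eq_bigr => V _.
rewrite /unzip1 /unzip2 !map_rev.
by rewrite !rev_zip // size_map size_tuple.
Qed.

Lemma pal_kid p : pal (@kid K p) = @kid K p.
Proof.
apply: functional_extensionality => s.
by rewrite /pal /kid /unzip1 /unzip2 !map_rev (inj_eq (can_inj (@revK _))).
Qed.

End S.

Theorem mainTheorem15 (K : fieldType) :
  (forall (p q : nat) (X : kfun K p q), is_rec X <-> is_birec X) /\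
  (forall (p q : nat),
     (forall (a b : K) (X Y : kfun K p q),
        pal (kadd (kscale a X) (kscale b Y)) = kadd (kscale a (pal X)) (kscale b (pal Y))) /\
     (forall X : kfun K p q, pal (pal X) = X) /\
     (forall X : kfun K p q, is_rec X -> is_rec (pal X)) /\
     (2 \notin [pchar K] -> forall A : kfun K p q, is_rec A ->
        is_rec (kscale (2%:R)^-1 (kadd A (pal A))) /\
        is_rec (kscale (2%:R)^-1 (kadd A (kscale (-1) (pal A)))))) /\
  (forall (p r q : nat) (A : kfun K p r) (B : kfun K r q),
     is_rec A -> is_rec B -> pal (kmul A B) = kmul (pal A) (pal B)) /\
  (forall p : nat, pal (@kid K p) = @kid K p).
split; first by move=> p q X; split; [exact: rec_birec | exact: birec_rec].
split.
  move=> p q; split.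
    move=> a b X Y; exact: functional_extensionality.
  split; first by move=> X; apply: functional_extensionality => s; rewrite /pal revK.
  split; first exact: rec_pal.
  move=> _ A HA; split; apply: rec_scale; apply: rec_add => //.
    exact: rec_pal.
  by apply: rec_scale; apply: rec_pal.
split; last exact: pal_kid.
move=> p r q A B _ _; exact: pal_kmul.
Qed.
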